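(* $\mathrm{GL}_3(\mathbb{F}_5)$ does not contain a subgroup isomorphic to $A_5\times V_4$.
   Context: $V_4\cong C_2\times C_2$ is the Klein four-group. *)

(* Defs.v *)
From mathcomp Require Import all_boot all_algebra all_fingroup all_solvable.
From mathcomp Require Import alt.
Set Implicit Arguments. Unset Strict Implicit. Unset Printing Implicit Defensive.

Definition A5 : {group {perm 'I_5}} := Alt_group 'I_5.

Definition V4 : {group ('Z_2 * 'Z_2)} :=
  setX_group [group of [set: 'Z_2]] [group of [set: 'Z_2]].

Definition A5xV4 : {group ({perm 'I_5} * ('Z_2 * 'Z_2))} := setX_group A5 V4.

(* Main.v *)
Require Import Defs.
From mathcomp Require Import all_boot all_algebra all_fingroup all_solvable alt.
Set Implicit Arguments. Unset Strict Implicit. Unset Printing Implicit Defensive.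

Section LinAlg.
Import GRing.Theory.
Local Open Scope ring_scope.
Lemma orth_idem_card (F : fieldType) (n : nat) (T : finType) (f : T -> 'M[F]_n.+1) :
  (forall S, f S * f S = f S) -> (forall S T, S != T -> f S * f T = 0) ->
  (#|[set S | f S != 0%R]| <= n.+1)%N.
Proof.
move=> idem orth.
set N := [set S | f S != 0].
pose e := @enum_val T (mem N).
pose r S := odflt ord0 [pick i | row i (f S) != 0].
have rP S : f S != 0 -> row (r S) (f S) != 0.
  rewrite /r; case: pickP => [i -> //|H] /negP; case; apply/eqP/row_matrixP => i.
  by rewrite row0; apply/eqP; move: (H i) => /negbT; rewrite negbK.
pose A := \matrix_(j < #|N|) row (r (e j)) (f (e j)).
have rowA j : row j A = row (r (e j)) (f (e j)) by rewrite rowK.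
have : row_free A.
  apply: inj_row_free => v vA0; apply/rowP => j; rewrite mxE.
  have := congr1 (mulmx ^~ (f (e j))) vA0.
  rewrite mul0mx (mulmx_sum_row v A) mulmx_suml (bigD1 j) //= big1 ?addr0.
    rewrite -scalemxAl rowA -row_mul mulmxE idem => /eqP.
    rewrite scaler_eq0 => /orP[/eqP // |] => Hr.
    have : e j \in N by apply: enum_valP.
    by rewrite inE => /rP; rewrite Hr.
  move=> l ne; rewrite -scalemxAl rowA -row_mul mulmxE orth ?row0 ?scaler0 //.
  by apply: contra ne => /eqP /enum_val_inj ->.
rewrite /row_free => /eqP <-; exact: rank_leq_col.
Qed.
Lemma prod_idem_r (R : ringType) (I : eqType) (r : seq I) (F : I -> R) (x : R) j0 :
  j0 \in r -> F j0 = x -> x * x = x -> (forall j, GRing.comm x (F j)) ->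
  \prod_(j <- r) F j * x = \prod_(j <- r) F j.
Proof.
move=> + <- xx cx; elim: r => // a r IH; rewrite inE big_cons => /orP[/eqP<-|/IH {}IH].
  have cP : GRing.comm (F j0) (\prod_(j <- r) F j) by apply: commr_prod.
  by rewrite -mulrA -cP mulrA xx cP.
by rewrite -mulrA IH.
Qed.

Lemma prod_scale (F : fieldType) n (I : Type) (r : seq I) (G : I -> 'M[F]_n.+1) (c : I -> F) y :
  (forall i, G i * y = c i *: y) ->
  \prod_(i <- r) G i * y = (\prod_(i <- r) c i) *: y.
Proof.
move=> H; elim: r => [|a r IH]; first by rewrite !big_nil mul1r scale1r.
by rewrite !big_cons -mulrA IH -scalerAr H scalerA mulrC.
Qed.

Lemma pm_eq (F : fieldType) (a b : F) : (2%:R : F) != 0 ->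
  (a = 1 \/ a = -1) -> (b = 1 \/ b = -1) -> (a == 1) = (b == 1) -> a = b.
Proof.
move=> h2 ha hb.
have n1 : (-1 : F) == 1 = false.
  apply/negbTE/eqP => H; move/eqP: h2; apply.
  by rewrite -[2%:R]/((1 + 1)%N%:R) natrD -{1}H addNr.
by case: ha => ->; case: hb => ->; rewrite ?eqxx ?n1.
Qed.

Lemma key (F : fieldType) (g : 'I_4 -> 'M[F]_3) :
  (2%:R : F) != 0 ->
  (forall i j, g i * g j = g j * g i) -> (forall i, g i * g i = 1) ->
  ~ (forall x y : {ffun 'I_4 -> bool},
       \prod_(i < 4) (if x i then g i else 1) = \prod_(i < 4) (if y i then g i else 1) -> x = y).
Proof.
move=> h2 hc hsq inj.
have h2i : (2%:R^-1 : F) * 2%:R = 1 by rewrite mulVf.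
pose p (b : bool) i : 'M[F]_3 := (2%:R^-1 : F) *: (1 + (if b then g i else - g i)).
have Gsq b i : (if b then g i else - g i) * (if b then g i else - g i) = 1.
  by case: b; rewrite ?mulrNN hsq.
have pc b i c j : GRing.comm (p b i) (p c j).
  rewrite /p /GRing.comm -!scalerAl -!scalerAr !scalerA mulrC; congr (_ *: _).
  rewrite !mulrDl !mulrDr !mul1r !mulr1.
  by case: b; case: c; rewrite ?mulrN ?mulNr ?opprK hc addrACA.
have pid b i : p b i * p b i = p b i.
  rewrite /p -scalerAl -scalerAr scalerA.
  rewrite mulrDl !mulrDr !mul1r mulr1 Gsq.
  set G := (if b then g i else - g i).
  have -> : 1 + G + (G + 1) = 2%:R *: (1 + G) by rewrite scaler_nat mulr2n [G + 1]addrC.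
  by rewrite scalerA -mulrA h2i mulr1.
have porth b i : p b i * p (~~ b) i = 0.
  rewrite /p -scalerAl -scalerAr scalerA; apply/eqP; rewrite scaler_eq0; apply/orP; right.
  have -> : (if ~~ b then g i else - g i) = - (if b then g i else - g i) by case: b; rewrite ?opprK.
  by rewrite mulrDl !mulrDr !mul1r mulr1 mulrN Gsq addrC addrA subrK subrr.
have psum i : p true i + p false i = 1.
  rewrite /p -scalerDr addrA addrAC addrK -mulr2n -scaler_nat scalerA.
  by rewrite mulVf // scale1r.
have pg b i : g i * p b i = (if b then 1 else -1) *: p b i.
  rewrite /p -scalerAr scalerA mulrC -scalerA; congr (_ *: _).
  by case: b; rewrite mulrDr mulr1 ?mulrN hsq ?scale1r ?scaleN1r 1?addrC // opprD opprK.
have gc i b j : GRing.comm (g i) (p b j).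
  rewrite /p /GRing.comm -scalerAl -scalerAr; congr (_ *: _).
  rewrite mulrDl mulrDr mul1r mulr1; case: b; rewrite ?mulrN ?mulNr hc //.
pose f (S : {ffun 'I_4 -> bool}) := \prod_(i < 4) p (S i) i.
have fr S i : f S * p (S i) i = f S.
  by apply: (@prod_idem_r _ _ _ _ _ i) => //; rewrite mem_index_enum.
have fl (S : {ffun _ -> bool}) i : p (S i) i * f S = f S.
  have cf : GRing.comm (p (S i) i) (f S) by apply: commr_prod => j _; apply: pc.
  by rewrite -{1}(fr S i) mulrA cf -mulrA pid fr.
have forth (S T : {ffun _ -> bool}) : S != T -> f S * f T = 0.
  move=> ST; case: (pickP (fun i => S i != T i)) => [i Hi|H]; last first.
    by move/eqP: ST; case; apply/ffunP => i; apply/eqP; move: (H i) => /negbT; rewrite negbK.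
  rewrite -(fr S i) -(fl T i) mulrA -(mulrA _ (p _ _)).
  have -> : T i = ~~ S i by move: Hi; case: (S i); case: (T i).
  by rewrite -mulrA (mulrA (p _ _)) porth mul0r mulr0.
have fid (S : {ffun _ -> bool}) : f S * f S = f S.
  rewrite {2}/f; elim: (index_enum _) => [|a r IH]; first by rewrite big_nil mulr1.
  by rewrite big_cons mulrA fr IH.
have fsum : \sum_S f S = 1.
  have := @bigA_distr_bigA _ 0 1 *%R +%R _ _ (fun i b => p b i); rewrite /f /= => <-; rewrite big1 // => i _; by rewrite big_bool; apply: psum.
have gf i (S : {ffun _ -> bool}) : g i * f S = (if S i then 1 else -1) *: f S.
  have cg : GRing.comm (g i) (f S) by apply: commr_prod => j _; apply: gc.
  rewrite -{1}(fr S i) mulrA cg -mulrA pg.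
  by rewrite -scalerAr fr.
pose sg (x S : {ffun 'I_4 -> bool}) : F := \prod_(i < 4) (if x i && ~~ S i then -1 else 1).
pose h (x : {ffun 'I_4 -> bool}) := \prod_(i < 4) (if x i then g i else 1).
have hf (x S : {ffun _ -> bool}) : h x * f S = sg x S *: f S.
  apply: prod_scale => i; case: (x i) => /=; last by rewrite mul1r scale1r.
  by rewrite gf; case: (S i).
have hsum (x : {ffun _ -> bool}) : h x = \sum_(S : {ffun 'I_4 -> bool}) sg x S *: f S.
  by rewrite -[h x]mulr1 -fsum mulr_sumr; apply: eq_bigr => S _; rewrite hf.
have sgpm (x S : {ffun _ -> bool}) : sg x S = 1 \/ sg x S = -1.
  apply: (big_ind (fun c : F => c = 1 \/ c = -1)); first by left.
    by move=> a b [->|->] [->|->]; rewrite ?mulr1 ?mul1r ?mulrNN ?mulr1; auto.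
  by move=> i _; case: (_ && _); auto.
have cardN : (#|[set S | f S != 0%R]| <= 3)%N.
  by apply: (@orth_idem_card F 2); [exact: fid | exact: forth].
pose s := enum [set S | f S != 0%R].
pose d : {ffun 'I_4 -> bool} := [ffun => false].
pose kk (x : {ffun 'I_4 -> bool}) := (sg x (nth d s 0) == 1, sg x (nth d s 1) == 1, sg x (nth d s 2) == 1).
have kinj : injective kk.
  move=> x y [e0 e1 e2]; apply: inj; rewrite -/(h x) -/(h y) !hsum.
  apply: eq_bigr => S _; case: (eqVneq (f S) 0) => [->|nz]; first by rewrite !scaler0.
  have Ss : S \in s by rewrite mem_enum inE.
  have Hk : (index S s < 3)%N by rewrite -index_mem in Ss; apply: leq_trans Ss _; rewrite /s -cardE.
  have Sk := nth_index d Ss.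
  congr (_ *: _); apply: pm_eq => //.
  by move: (index S s) Hk Sk => [|[|[|]]] // _ <-.
have := @leq_card _ _ kk kinj.
by rewrite card_ffun !card_prod !card_bool card_ord.
Qed.
End LinAlg.

Lemma tpE (T : finType) (x y z : T) :
  tperm x y z = if z == x then y else if z == y then x else z.
Proof. by case: tpermP => [->|->|/eqP/negbTE-> /eqP/negbTE->]; rewrite ?eqxx //; case: eqP. Qed.

Definition z0 : 'I_5 := Ordinal (isT : 0 < 5).
Definition z1 : 'I_5 := Ordinal (isT : 1 < 5).
Definition z2 : 'I_5 := Ordinal (isT : 2 < 5).
Definition z3 : 'I_5 := Ordinal (isT : 3 < 5).
Definition p1 : {perm 'I_5} := (tperm z0 z1 * tperm z2 z3)%g.
Definition p2 : {perm 'I_5} := (tperm z0 z2 * tperm z1 z3)%g.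

Lemma p12 : (p1 * p2 = p2 * p1)%g.
Proof.
apply/permP => z; rewrite !permM !tpE.
by case: z => [[|[|[|[|[|]]]]] Hz].
Qed.

Lemma p1sq : (p1 * p1 = 1)%g.
Proof. by apply/permP => z; rewrite !permM perm1 !tpE; case: z => [[|[|[|[|[|]]]]] Hz] //=; apply: val_inj. Qed.
Lemma p2sq : (p2 * p2 = 1)%g.
Proof. by apply/permP => z; rewrite !permM perm1 !tpE; case: z => [[|[|[|[|[|]]]]] Hz] //=; apply: val_inj. Qed.
Lemma p1A : p1 \in A5.
Proof. by rewrite /A5 Alt_even /p1 odd_permM !odd_tperm. Qed.
Lemma p2A : p2 \in A5.
Proof. by rewrite /A5 Alt_even /p2 odd_permM !odd_tperm. Qed.

Lemma pairM (gT hT : finGroupType) (x1 y1 : gT) (x2 y2 : hT) :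
  ((x1, x2) * (y1, y2) = (x1 * y1, x2 * y2))%g.
Proof. by []. Qed.
Lemma pair1 (gT hT : finGroupType) : (1 : gT * hT)%g = (1, 1)%g.
Proof. by []. Qed.

Definition o : 'Z_2 := inZp 1.
Lemma oo : (o * o = 1)%g. Proof. by apply: val_inj. Qed.
Definition a (i : 'I_4) : {perm 'I_5} * ('Z_2 * 'Z_2) :=
  match val i with
  | 0 => (p1, 1)%g | 1 => (p2, 1)%g | 2 => (1, (o, 1))%g | _ => (1, (1, o))%g end.

Lemma aMem i : a i \in A5xV4.
Proof.
rewrite /A5xV4 /a; case: i => [[|[|[|[|]]]] Hi] //=; rewrite in_setX ?p1A ?p2A ?group1 //=. all: by rewrite in_setX !inE.
Qed.

Lemma aC i j : (a i * a j = a j * a i)%g.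
Proof.
rewrite /a; case: i => [[|[|[|[|]]]] Hi] //; case: j => [[|[|[|[|]]]] Hj] //=; rewrite ?pair1 !pairM ?mulg1 ?mul1g ?p12 //.
Qed.

Lemma aSq i : (a i * a i = 1)%g.
Proof.
rewrite /a; case: i => [[|[|[|[|]]]] Hi] //=; rewrite ?pair1 !pairM ?mulg1 ?mul1g ?p1sq ?p2sq ?oo //.
Qed.

Definition w0 : 'I_4 := Ordinal (isT : 0 < 4).
Definition w1 : 'I_4 := Ordinal (isT : 1 < 4).
Definition w2 : 'I_4 := Ordinal (isT : 2 < 4).
Definition w3 : 'I_4 := Ordinal (isT : 3 < 4).

Lemma prod4 (gT : finGroupType) (F : 'I_4 -> gT) :
  (\prod_(i < 4) F i)%g = (F w0 * F w1 * F w2 * F w3)%g.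
Proof.
rewrite !big_ord_recr big_ord0 /= mul1g.
by congr (F _ * F _ * F _ * F _)%g; apply: val_inj.
Qed.

Definition dec (u : {perm 'I_5} * ('Z_2 * 'Z_2)) :=
  ((u.1 z0 == z1) || (u.1 z0 == z3), (u.1 z0 == z2) || (u.1 z0 == z3),
   u.2.1 != 1%g, u.2.2 != 1%g).

Lemma decP (x : {ffun 'I_4 -> bool}) :
  dec (\prod_(i < 4) (if x i then a i else 1))%g = (x w0, x w1, x w2, x w3).
Proof.
rewrite prod4 /a /=.
case: (x w0); case: (x w1); case: (x w2); case: (x w3);
  by rewrite /dec /= ?mulg1 ?mul1g /p1 /p2 ?perm1 ?permM ?perm1 ?tpE.
Qed.

Theorem lemma3p18 :
  ~ exists H : {group {'GL_3['F_5]}},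
      H \subset ('GL_3['F_5])%g /\ (H \isog A5xV4)%g.
Proof.
case=> H [_ /isog_symr /isogP [phi injphi _]].
pose g i : 'M['F_5]_3 := GLval (phi (a i)).
have gM (u v : {'GL_3['F_5]}) : ((GLval u : 'M['F_5]_3) * GLval v)%R = GLval (u * v)%g.
  exact: esym (GL_ME u v).
apply: (@key _ g) => [//|i j|i|x y E].
- by rewrite /g !gM -!morphM ?aMem // aC.
- by rewrite /g gM -morphM ?aMem // aSq morph1.
have hE (z : {ffun 'I_4 -> bool}) : (\prod_(i < 4) (if z i then g i else 1))%R =
    GLval (phi (\prod_(i < 4) (if z i then a i else 1))%g).
  rewrite (morph_prod phi) => [|i _]; last by case: (z i); rewrite ?aMem ?group1.
  rewrite (big_morph (@GLval 3 _) (@GL_ME 3 _) (GL_1E 3 _)).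
  by apply: eq_bigr => i _; case: (z i); rewrite ?morph1.
have Mem (z : {ffun 'I_4 -> bool}) : (\prod_(i < 4) (if z i then a i else 1))%g \in A5xV4.
  by apply: group_prod => i _; case: (z i); rewrite ?aMem ?group1.
rewrite !hE in E.
have E2 : phi (\prod_(i < 4) (if x i then a i else 1))%g =
          phi (\prod_(i < 4) (if y i then a i else 1))%g by apply: val_inj; exact: E.
move: (injmP injphi _ _ (Mem x) (Mem y) E2) => /(congr1 dec); rewrite !decP => -[e0 e1 e2 e3].
apply/ffunP => -[[|[|[|[|]]]] Hi] //.
- by have -> : Ordinal Hi = w0 by apply: val_inj.
- by have -> : Ordinal Hi = w1 by apply: val_inj.
- by have -> : Ordinal Hi = w2 by apply: val_inj.
- by have -> : Ordinal Hi = w3 by apply: val_inj.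
Qed.
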